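(* Let $\varepsilon>0$, let $y\in L^\infty((E_{\min},E_{\max})\times\Sigma)$ be positive, and set $s_i=\sqrt{\mathscr D^*\big(\int_{E_{\min}}^{E_{\max}}y\,g_i\,dE\big)}$ on $\Omega$, $i=1,\dots,N$; assume each $s_i$ is bounded and bounded away from zero on $\Omega$. On $L^2(\Omega;\mathbb R^N)$ define the quadratic form $$Q_y(\boldsymbol\psi,\boldsymbol\psi)=\frac12\int_\Sigma\big(\mathscr D(\boldsymbol\psi/\boldsymbol s)\big)^TG\,\mathscr D(\boldsymbol\psi/\boldsymbol s)\,d\mathcal H^n,$$ where $\boldsymbol\psi/\boldsymbol s=(\psi_1/s_1,\dots,\psi_N/s_N)$ and $\mathscr D$ is applied componentwise, and let $\lambda_y=\sup_{\|\boldsymbol\psi\|_{L^2}\le1}Q_y(\boldsymbol\psi,\boldsymbol\psi)$, assumed finite. Let $\boldsymbol w^{\mathrm{old}},\boldsymbol w^{\mathrm{new}}\in L^\infty(\Omega;[0,1]^N)$ and define $$A^\varepsilon=\int_\Omega\sum_{i=1}^N\frac{\mathscr D^*\big(\int_{E_{\min}}^{E_{\max}}y\,g_i\,dE\big)\,(w^{\mathrm{new}}_i-w^{\mathrm{old}}_i)^2}{w^{\mathrm{old}}_i+\varepsilon}\,dx,\qquad C=\frac12\int_\Sigma\big(\mathscr D(\boldsymbol w^{\mathrm{new}}-\boldsymbol w^{\mathrm{old}})\big)^TG\,\mathscr D(\boldsymbol w^{\mathrm{new}}-\boldsymbol w^{\mathrm{old}})\,d\mathcal H^n.$$ If $C>0$,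 then $\dfrac{A^\varepsilon}{C}\ge\dfrac1{1+\varepsilon}\,\dfrac1{\lambda_y}$.
   Context: Setting: $n\in\{2,3\}$, $\Omega\subset\mathbb R^n$ nonempty bounded open; $\xi\subset\mathbb R^n\setminus\overline\Omega$ a compact smooth curve of finite length without self-intersections; $L^+_{x,\theta}=\{x+s\theta:s\ge0\}$; $\Sigma=\{(x,\theta)\in\xi\times\mathbb S^{n-1}:\mathcal H^1(L^+_{x,\theta}\cap\Omega)>0\}$ with measure $\mathcal H^n$; $\mathscr Du(x,\theta)=\int_{L^+_{x,\theta}}u\,d\mathcal H^1$ ($u$ extended by $0$ outside $\Omega$), with dual $\mathscr D^*h(z)=\int_\xi|z-x|^{1-n}h\big(x,\tfrac{z-x}{|z-x|}\big)\,d\mathcal H^1(x)$ for $z\in\Omega$ ($h$ extended by $0$ off $\Sigma$). $0<E_{\min}<E_{\max}$; $I_0:[E_{\min},E_{\max}]\to[0,\infty)$ Lebesgue integrable; $g_1,\dots,g_N:[E_{\min},E_{\max}]\to[0,\infty)$ bounded measurable, $\boldsymbol g=(g_1,\dots,g_N)$; $G=\int_{E_{\min}}^{E_{\max}}I_0\,\boldsymbol g\otimes\boldsymbol g\,dE\in\mathbb R^{N\times N}$. *)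

(* Defs.v *)
From HB Require Import structures.
From mathcomp Require Import all_boot all_order all_algebra.
From mathcomp Require Import all_classical all_reals all_analysis.
Set Implicit Arguments. Unset Strict Implicit. Unset Printing Implicit Defensive.
Import Order.TTheory GRing.Theory Num.Theory.
Import numFieldNormedType.Exports.
Local Open Scope classical_set_scope.
Local Open Scope ring_scope.

(* R^n is represented by row vectors 'rV[R]_n.  We equip it with the        *)
(* product (= Borel) sigma-algebra generated by the coordinate maps, exactly *)
(* as mathcomp-analysis does for n.-tuple.                                  *)
Definition rV_display : measure_display -> measure_display.
Proof. exact. Qed.

Section measurable_rV.
Context (R : realType) (n : nat).
Let coord : 'I_n -> 'rV[R]_n -> R := fun i x => x ord0 i.
Let s0 : g_sigma_preimage coord set0.
Proof. exact: sigma_algebra0. Qed.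
Let sC A : g_sigma_preimage coord A -> g_sigma_preimage coord (~` A).
Proof. exact: sigma_algebraC. Qed.
Let sU (F : _^nat) : (forall i, g_sigma_preimage coord (F i)) ->
  g_sigma_preimage coord (\bigcup_i (F i)).
Proof. exact: sigma_algebra_bigcup. Qed.
HB.instance Definition _ := @isMeasurable.Build (rV_display default_measure_display)
  'rV[R]_n (g_sigma_preimage coord) s0 sC sU.
End measurable_rV.

Section setting.
Context (R : realType) (n : nat).
Local Notation V := 'rV[R]_n.

(* Euclidean norm on R^n (the library norm on 'rV is the sup norm). *)
Definition enorm (v : V) : R := Num.sqrt (\sum_(i < n) v ord0 i ^+ 2).

Definition sphere : set V := [set th | enorm th = 1].

Definition ext0 (T : Type) (D : set T) (f : T -> R) : T -> R :=
  fun x => if `[< D x >] then f x else 0.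

(* mu is the Lebesgue measure of R^n: it gives every half-open box its   *)
(* volume (this determines mu on the Borel sets of R^n).                  *)
Definition is_lebesgue_rV (mu : {measure set V -> \bar R}) : Prop :=
  forall a b : V, (forall i, a ord0 i <= b ord0 i) ->
    mu [set x | forall i, a ord0 i < x ord0 i <= b ord0 i] =
    (\prod_(i < n) (b ord0 i - a ord0 i))%:E.

(* gam : [0, ell] -> R^n is an arc-length parametrisation of a compact     *)
(* smooth curve without self-intersections: gam is smooth, has unit speed *)
(* and is either injective on [0,ell] (an arc) or ell-periodic and         *)
(* injective on [0,ell[ (a closed curve).                                   *)
Definition arclength_param (gam : R -> V) (ell : R) : Prop :=
  [/\ 0 < ell,
      (forall (k : nat) (t : R), derivable (iter k (@derive1 R V) gam) t 1),
      (forall t, 0 <= t <= ell -> enorm (derive1 gam t) = 1) &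
      ((forall s t, 0 <= s <= ell -> 0 <= t <= ell -> gam s = gam t -> s = t)
       \/
       ((forall t, gam (t + ell) = gam t) /\
        (forall s t, 0 <= s < ell -> 0 <= t < ell -> gam s = gam t -> s = t)))].

Definition curve (gam : R -> V) (ell : R) : set V := gam @` `[0, ell].

Definition cone (B : set V) : set V :=
  [set x | exists r th, [/\ 0 < r <= 1, B th, sphere th & x = r *: th]].

(* nu is the n-dimensional Hausdorff measure on xi x S^{n-1}: with the     *)
(* arc-length parametrisation of xi and the surface measure of the sphere *)
(* sigma(B) = n * Leb(cone B), nu is the image of dt (x) sigma.            *)
Definition is_Hn_curve_sphere (mu : {measure set V -> \bar R})
    (gam : R -> V) (ell : R) (nu : {measure set (V * V) -> \bar R}) : Prop :=
  forall A : set (V * V), measurable A ->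
    nu A = (\int[lebesgue_measure]_(t in `[0%R, ell])
              (n%:R%:E * mu (cone [set th | A (gam t, th)])))%E.

(* {s >= 0 : x + s th in Omega}, i.e. L^+_{x,th} cap Omega in arc length *)
Definition ray_in (Omega : set V) (x th : V) : set R :=
  [set s : R | 0 <= s /\ Omega (x + s *: th)].

Definition Sigma (Omega : set V) (gam : R -> V) (ell : R) : set (V * V) :=
  [set p | [/\ curve gam ell p.1, sphere p.2 &
     (0 < lebesgue_measure (ray_in Omega p.1 p.2))%E]].

Definition Dray (Omega : set V) (u : V -> R) (x th : V) : R :=
  fine (\int[lebesgue_measure]_(s in `[0, +oo[) (ext0 Omega u (x + s *: th))%:E).

(* dual operator  D^* h (z) = int_xi |z-x|^{1-n} h(x,(z-x)/|z-x|) dH^1(x), *)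
(* h extended by 0 off Sigma; H^1 on xi via the arc-length parametrisation *)
Definition Dstar (gam : R -> V) (ell : R) (Sig : set (V * V))
    (h : V * V -> R) (z : V) : R :=
  fine (\int[lebesgue_measure]_(t in `[0%R, ell])
    ((enorm (z - gam t) ^+ n.-1)^-1 *
      ext0 Sig h (gam t, (enorm (z - gam t))^-1 *: (z - gam t)))%:E).

Section vectorial.
Context (N : nat).

Definition Gram (Emin Emax : R) (I0 : R -> R) (g : 'I_N -> R -> R)
    (i j : 'I_N) : R :=
  fine (\int[lebesgue_measure]_(E in `[Emin, Emax]) (I0 E * g i E * g j E)%:E).

Definition qform (G : 'I_N -> 'I_N -> R) (v : 'I_N -> R) : R :=
  \sum_(i < N) \sum_(j < N) v i * G i j * v j.

Definition Qform (nu : {measure set (V * V) -> \bar R}) (Sig : set (V * V))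
    (G : 'I_N -> 'I_N -> R) (Omega : set V) (u : 'I_N -> V -> R) : \bar R :=
  ((2^-1)%:E * \int[nu]_(p in Sig)
     (qform G (fun i => Dray Omega (u i) p.1 p.2))%:E)%E.

Definition L2ball (mu : {measure set V -> \bar R}) (Omega : set V)
    : set ('I_N -> V -> R) :=
  [set psi : 'I_N -> V -> R | (forall i, measurable_fun Omega (psi i)) /\
             (\int[mu]_(z in Omega) (\sum_(i < N) psi i z ^+ 2)%:E <= 1)%E].

End vectorial.
End setting.

(* Main.v *)
Require Import Defs.
From HB Require Import structures.
From mathcomp Require Import all_boot all_order all_algebra.
From mathcomp Require Import all_classical all_reals all_analysis.
From mathcomp Require Import lra ring.
Set Implicit Arguments. Unset Strict Implicit. Unset Printing Implicit Defensive.
Import Order.TTheory GRing.Theory Num.Theory.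
Import numFieldNormedType.Exports.
Local Open Scope classical_set_scope.
Local Open Scope ring_scope.
Import HBNNSimple.

Section aux.
Local Open Scope ereal_scope.
Context d (T : measurableType d) (R : realType) (mu : {measure set T -> \bar R}).

Let nnint (f : T -> \bar R) := ereal_sup [set sintegral mu h |
  h in [set h : {nnsfun T >-> R} | forall x, (h x)%:E <= f x]].

Lemma nnintZ (k : R) f : (0 < k)%R -> nnint (fun x => k%:E * f x) = k%:E * nnint f.
Proof.
move=> k0; rewrite /nnint -ereal_sup_pZl //; congr ereal_sup.
apply/seteqP; split => z /=.
- move=> [h hf <-{z}].
  have ki0 : (0 <= k^-1)%R by rewrite invr_ge0 ltW.
  exists (sintegral mu (scale_nnsfun h ki0)).
    exists (scale_nnsfun h ki0) => // x /=.
    rewrite -(@lee_pmul2l _ k%:E) ?lte_fin //= -EFinM mulrA mulrV ?unitfE ?gt_eqF // mul1r.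
    exact: hf.
  rewrite -(sintegralrM mu k (scale_nnsfun h ki0)); apply: eq_sintegral => x /=.
  by rewrite mulrA mulrV ?unitfE ?gt_eqF // mul1r.
- move=> [_ [h hf <-] <-{z}].
  exists (scale_nnsfun h (ltW k0)).
    move=> x /=; rewrite EFinM lee_pmul2l ?lte_fin //; exact: hf.
  by rewrite -(sintegralrM mu k h).
Qed.

Lemma subZ (k : R) (a b : \bar R) : (0 < k)%R -> 0 <= a -> 0 <= b ->
  k%:E * a - k%:E * b = k%:E * (a - b).
Proof.
move=> k0; move: a b; case=> [a| |] //; case=> [b| |] // _ _.
- by rewrite -EFinM -EFinM /= -EFinM -EFinD mulrBr.
- by rewrite gt0_muley ?lte_fin //= gt0_muleNy ?lte_fin.
- by rewrite gt0_muley ?lte_fin //= gt0_muley ?lte_fin.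
- by rewrite gt0_muley ?lte_fin //= gt0_muleNy ?lte_fin.
Qed.

Lemma integralZ_gen (D : set T) (k : R) f : (0 < k)%R ->
  \int[mu]_(x in D) (k%:E * f x) = k%:E * \int[mu]_(x in D) f x.
Proof.
move=> k0; rewrite /integral erestrict_scale ge0_funeposM ?ltW // ge0_funenegM ?ltW //.
rewrite -/(nnint _) -/(nnint _) -/(nnint _) -/(nnint _) !nnintZ //.
have nn0 g : (forall x, 0 <= g x) -> 0 <= nnint g.
  move=> g0; apply: ereal_sup_ubound; exists nnsfun0 => //; last exact: sintegral0.
apply: subZ => //.
- by apply: nn0 => x; exact: funepos_ge0.
- by apply: nn0 => x; exact: funeneg_ge0.
Qed.
Lemma le_int_gen (D : set T) (f g : T -> \bar R) :
  (forall x, D x -> 0 <= f x) -> (forall x, D x -> f x <= g x) ->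
  \int[mu]_(x in D) f x <= \int[mu]_(x in D) g x.
Proof.
move=> f0 fg; have g0 : forall x, D x -> 0 <= g x.
  by move=> x Dx; apply: le_trans (f0 x Dx) (fg x Dx).
rewrite !ge0_integralE //; apply: ereal_sup_le => z [h hf <-{z}].
exists h => // x; apply: (le_trans (hf x)); exact: lee_restrict.
Qed.
End aux.
Lemma coord_meas (R : realType) n (i : 'I_n) (a b : R) :
  measurable [set x : 'rV[R]_n | a < x ord0 i <= b].
Proof.
apply: sub_sigma_algebra.
rewrite (bigD1 i) //=; left.
exists `]a, b]%classic; first exact: measurable_itv.
by apply/seteqP; split => x /=; rewrite in_itv /=; [case|].
Qed.

Lemma box_meas (R : realType) n (a b : 'rV[R]_n) :
  measurable [set x : 'rV[R]_n | forall i, a ord0 i < x ord0 i <= b ord0 i].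
Proof.
have -> : [set x : 'rV[R]_n | forall i, a ord0 i < x ord0 i <= b ord0 i] =
   \bigcap_(i in [set: 'I_n]) [set x : 'rV[R]_n | a ord0 i < x ord0 i <= b ord0 i].
  apply/seteqP; split => x /=.
  - by move=> H i _; exact: H.
  - by move=> H i; exact: H.
apply: fin_bigcap_measurable.
  exact: (@finite_finset 'I_n [set: 'I_n]).
move=> i _; exact: coord_meas.
Qed.
Lemma entry_le (R : realType) n (x : 'rV[R]_n) i : `|x ord0 i| <= `|x|.
Proof.
rewrite [X in _ <= X]/Num.norm /= mx_normrE.
by rewrite (bigD1 (ord0, i)) //= le_max lexx.
Qed.

Lemma bounded_box (R : realType) n (O : set 'rV[R]_n) : bounded_set O ->
  exists M : R, 0 < M /\ forall x, O x -> forall i, - M < x ord0 i <= M.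
Proof.
move=> [M [Mr HM]].
exists (`|M| + 2); split; first by rewrite ltr_pwDr // ?normr_ge0.
move=> x Ox i.
have h0 : `|M| < `|M| + 1 by rewrite ltrDl ltr01.
have /(_ x Ox) := HM (`|M| + 1) (le_lt_trans (ler_norm M) h0).
move=> /= nx; have := le_trans (entry_le x i) nx.
rewrite ler_norml => /andP[h1 h2]; apply/andP; split; lra.
Qed.

Lemma int_fin (R : realType) n (mu : {measure set 'rV[R]_n -> \bar R})
  (O : set 'rV[R]_n) (F : 'rV[R]_n -> R) (K : R) :
  (0 <= K) -> is_lebesgue_rV mu -> bounded_set O -> (forall x, O x -> 0 <= F x <= K) ->
  (\int[mu]_(x in O) (F x)%:E < +oo)%E.
Proof.
move=> K0 Hmu Ob FK.
have [M [M0 HM]] := bounded_box Ob.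
pose a : 'rV[R]_n := const_mx (- M).
pose b : 'rV[R]_n := const_mx M.
pose B := [set x : 'rV[R]_n | forall i, a ord0 i < x ord0 i <= b ord0 i].
rewrite integral_mkcond.
apply: (@le_lt_trans _ _ (\int[mu]_(x in setT) ((cst K%:E) \_ B) x)%E).
  apply: le_int_gen => x _.
    by apply: erestrict_ge0 => y Oy; rewrite lee_fin; have /andP[] := FK y Oy.
  rewrite /patch; case: ifPn => [/[1!inE] Ox|_]; last first.
    by case: ifPn => //; rewrite lee_fin.
  have /andP[_ FxK] := FK x Ox.
  rewrite ifT; first by rewrite lee_fin.
  by rewrite inE => i; rewrite /a /b !mxE; apply: HM.
rewrite -integral_mkcond integral_cst; last exact: box_meas.
rewrite Hmu; last by move=> i; rewrite !mxE; lra.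
by rewrite -EFinM ltry.
Qed.

Lemma fineZ (R : realType) (c : R) (x : \bar R) : (0 < c)%R -> fine (c%:E * x)%E = c * fine x.
Proof.
move=> c0; case: x => [x| |] //=.
- by rewrite gt0_muley ?lte_fin // mulr0.
- by rewrite gt0_muleNy ?lte_fin // mulr0.
Qed.

Lemma DrayZ (R : realType) n (O : set 'rV[R]_n) (u v : 'rV[R]_n -> R) (c : R) x th :
  (0 < c)%R -> (forall z, O z -> u z = c * v z) ->
  Dray O u x th = c * Dray O v x th.
Proof.
move=> c0 uv; rewrite /Dray -fineZ //; congr fine.
rewrite -integralZ_gen //; apply: eq_integral => r _.
rewrite -EFinM; congr EFin; rewrite /ext0; case: asboolP => [Oz|_].
  by rewrite uv.
by rewrite mulr0.
Qed.

Lemma qformZ (R : realType) N (G : 'I_N -> 'I_N -> R) (v : 'I_N -> R) (c : R) :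
  qform G (fun i => c * v i) = c ^+ 2 * qform G v.
Proof.
rewrite /qform mulr_sumr; apply: eq_bigr => i _.
rewrite mulr_sumr; apply: eq_bigr => j _; ring.
Qed.


Lemma tb (R : realType) (X t e K : R) :
  0 <= X <= K -> 0 < e <= t -> 0 <= X / t <= K / e.
Proof.
move=> /andP[X0 XK] /andP[e0 et]; have t0 : 0 < t by apply: lt_le_trans et.
apply/andP; split; first by rewrite divr_ge0 // ltW.
apply: ler_pM => //; first by rewrite invr_ge0 ltW.
by rewrite lef_pV2 ?posrE.
Qed.

Lemma tl (R : realType) (X t e : R) :
  0 <= X -> 0 < t <= 1 + e -> X <= (1 + e) * (X / t).
Proof.
move=> X0 /andP[t0 te]; rewrite mulrA ler_pdivlMr //.
nra.
Qed.

Lemma sqb (R : realType) (s w c : R) :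
  0 < s <= c -> -1 <= w <= 1 -> 0 <= s ^+ 2 * w ^+ 2 <= c ^+ 2.
Proof.
move=> /andP[s0 sc] /andP[w1 w2]; apply/andP; split.
  by rewrite mulr_ge0 // sqr_ge0.
have s2 : s ^+ 2 <= c ^+ 2 by nra.
have w3 : w ^+ 2 <= 1 by nra.
have : 0 <= s ^+ 2 by rewrite sqr_ge0.
have : 0 <= w ^+ 2 by rewrite sqr_ge0.
nra.
Qed.

Lemma final_ineq (R : realType) (a b cc l e : R) : 0 < e -> 0 < b -> 0 < cc ->
  b <= (1 + e) * a -> cc / b <= l -> (1 + e)^-1 * l^-1 <= a / cc.
Proof.
move=> e0 b0 c0 ba cl.
have H1 : cc <= l * b by rewrite -ler_pdivrMr.
have l0 : 0 < l by apply: lt_le_trans cl; rewrite divr_gt0.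
have e1 : 0 < 1 + e by lra.
have H2 : cc <= (1 + e) * a * l by nra.
have -> : (1 + e)^-1 * l^-1 = ((1 + e) * l)^-1 by rewrite invfM.
rewrite ler_pdivlMr // -ler_pdivlMl ?mulr_gt0 //.
rewrite invrK; first nra.
by rewrite invr_gt0 mulr_gt0.
Qed.

Theorem lemma3p6 (R : realType) (n N : nat)
  (mu : {measure set 'rV[R]_n -> \bar R})
  (Omega : set 'rV[R]_n) (gam : R -> 'rV[R]_n) (ell : R)
  (nu : {measure set ('rV[R]_n * 'rV[R]_n) -> \bar R})
  (Emin Emax : R) (I0 : R -> R) (g : 'I_N -> R -> R)
  (eps : R) (y : R * ('rV[R]_n * 'rV[R]_n) -> R)
  (wold wnew : 'I_N -> 'rV[R]_n -> R) :
  (n = 2%N \/ n = 3%N) ->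
  is_lebesgue_rV mu ->
  Omega !=set0 -> open Omega -> bounded_set Omega ->
  arclength_param gam ell ->
  curve gam ell `&` closure Omega = set0 ->
  is_Hn_curve_sphere mu gam ell nu ->
  0 < Emin -> Emin < Emax ->
  (forall E, Emin <= E <= Emax -> 0 <= I0 E) ->
  lebesgue_measure.-integrable `[Emin, Emax] (EFin \o I0) ->
  (forall i, measurable_fun `[Emin, Emax] (g i)) ->
  (forall i E, Emin <= E <= Emax -> 0 <= g i E) ->
  (exists M, forall i E, Emin <= E <= Emax -> g i E <= M) ->
  0 < eps ->
  let Sig := Sigma Omega gam ell in
  measurable_fun (`]Emin, Emax[ `*` Sig) y ->
  (exists M, forall q, (`]Emin, Emax[ `*` Sig) q -> `|y q| <= M) ->
  (forall q, (`]Emin, Emax[ `*` Sig) q -> 0 < y q) ->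
  let h (i : 'I_N) (p : 'rV[R]_n * 'rV[R]_n) : R :=
    fine (\int[lebesgue_measure]_(E in `]Emin, Emax[) (y (E, p) * g i E)%:E) in
  let s (i : 'I_N) (z : 'rV[R]_n) : R := Num.sqrt (Dstar gam ell Sig (h i) z) in
  (forall i, measurable_fun Omega (s i)) ->
  (exists c1 c2, 0 < c1 /\ forall i z, Omega z -> c1 <= s i z <= c2) ->
  let G := Gram Emin Emax I0 g in
  let lam := ereal_sup [set Qform nu Sig G Omega (fun i z => psi i z / s i z)
                        | psi in L2ball (N:=N) mu Omega] in
  (lam < +oo)%E ->
  (forall i, measurable_fun Omega (wold i)) ->
  (forall i, measurable_fun Omega (wnew i)) ->
  (forall i z, Omega z -> 0 <= wold i z <= 1 /\ 0 <= wnew i z <= 1) ->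
  let A := (\int[mu]_(z in Omega)
     (\sum_(i < N) Dstar gam ell Sig (h i) z * (wnew i z - wold i z) ^+ 2
                   / (wold i z + eps))%:E)%E in
  let C := Qform nu Sig G Omega (fun i z => wnew i z - wold i z) in
  (0 < C)%E ->
  (1 + eps)^-1 * (fine lam)^-1 <= fine A / fine C.
Proof.
move=> n23 Hmu One Oopen Obd Hgam Hdisj Hnu Emin0 EminEmax I0pos I0int gmeas gpos gbd eps0.
move=> Sig ymeas ybd ypos h s smeas [c1 [c2 [c10 Hs]]] G lam lamfin woldm wnewm wb A C C0.
pose w i z := wnew i z - wold i z.
have sD i z : Omega z -> 0 < s i z /\ Dstar gam ell Sig (h i) z = s i z ^+ 2.
  move=> Oz; have /andP[c1s _] := Hs i z Oz.
  have s0 : 0 < s i z by apply: lt_le_trans c1s.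
  split => //; move: s0; rewrite /s sqrtr_gt0 => D0.
  by rewrite sqr_sqrtr // ltW.
pose B := (\int[mu]_(z in Omega) (\sum_(i < N) (s i z * w i z) ^+ 2)%:E)%E.
have K c : 0 < c -> ((c ^+ 2)%:E * B <= 1)%E -> ((c ^+ 2)%:E * C <= lam)%E.
  move=> c0 cB; apply: ereal_sup_ubound => /=.
  exists (fun i z => c * (s i z * w i z)).
    split.
      move=> i; apply: measurable_realfun.measurable_funM; first exact: measurable_cst.
      apply: measurable_realfun.measurable_funM; first exact: smeas.
      exact: measurable_realfun.measurable_funB.
    apply: le_trans cB; rewrite /B -integralZ_gen ?exprn_gt0 //.
    rewrite le_eqVlt; apply/orP; left; apply/eqP/eq_integral => z _.
    rewrite -EFinM mulr_sumr; congr EFin.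
    by apply: eq_bigr => i _; rewrite exprMn.
  rewrite /C /Qform muleCA; congr (_ * _)%E.
  rewrite -integralZ_gen ?exprn_gt0 //; apply: eq_integral => p _.
  rewrite -EFinM -qformZ; congr EFin; congr qform; apply/funext => i.
  apply: DrayZ => // z Oz; have [s0 _] := sD i z Oz.
  by rewrite mulrCA mulrAC divff ?mul1r // gt_eqF.
have Ab i z : Omega z -> 0 <= Dstar gam ell Sig (h i) z * (wnew i z - wold i z) ^+ 2
    / (wold i z + eps) <= c2 ^+ 2 / eps.
  move=> Oz; have [s0 ->] := sD i z Oz; have [H1 H2] := wb i z Oz; move/andP: H1 => [wo0 wo1]; move/andP: H2 => [wn0 wn1].
  apply: tb.
    apply: sqb; last by apply/andP; split; lra.
    by apply/andP; split => //; have /andP[_ ->] := Hs i z Oz.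
  by apply/andP; split => //; lra.
have Bl i z : Omega z -> (s i z * w i z) ^+ 2 <= (1 + eps) *
    (Dstar gam ell Sig (h i) z * (wnew i z - wold i z) ^+ 2 / (wold i z + eps)).
  move=> Oz; have [s0 ->] := sD i z Oz; have [H1 H2] := wb i z Oz; move/andP: H1 => [wo0 wo1]; move/andP: H2 => [wn0 wn1].
  rewrite exprMn; apply: tl; first by rewrite mulr_ge0 ?sqr_ge0.
  by apply/andP; split; lra.
have Afin : (A < +oo)%E.
  apply: (int_fin (K := (c2 ^+ 2 / eps) *+ N)) => //.
    by rewrite mulrn_wge0 // divr_ge0 ?sqr_ge0 // ltW.
  move=> z Oz; apply/andP; split.
    by apply: sumr_ge0 => i _; have /andP[] := Ab i z Oz.
  rewrite -[in X in _ <= X](card_ord N) -sumr_const.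
  by apply: ler_sum => i _; have /andP[] := Ab i z Oz.
have A0 : (0 <= A)%E.
  apply: integral_ge0 => z Oz; rewrite lee_fin.
  by apply: sumr_ge0 => i _; have /andP[] := Ab i z Oz.
have BA : (B <= (1 + eps)%:E * A)%E.
  rewrite /A -integralZ_gen; last lra.
  apply: le_int_gen => z Oz.
    by rewrite lee_fin; apply: sumr_ge0 => i _; rewrite sqr_ge0.
  rewrite -EFinM lee_fin mulr_sumr; apply: ler_sum => i _; exact: Bl.
have B0 : (0 <= B)%E.
  by apply: integral_ge0 => z Oz; rewrite lee_fin; apply: sumr_ge0 => i _; rewrite sqr_ge0.
clearbody lam A C B.
have Afn : A \is a fin_num by rewrite ge0_fin_numE.
have Bfin : (B < +oo)%E.
  by apply: le_lt_trans BA _; rewrite -(fineK Afn) -EFinM ltry.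
have Bfn : B \is a fin_num by rewrite ge0_fin_numE.
have sq (x : R) : 0 < x -> 0 < Num.sqrt x /\ Num.sqrt x ^+ 2 = x.
  by move=> x0; rewrite sqrtr_gt0 sqr_sqrtr // ltW.
have b0 : 0 <= fine B by rewrite fine_ge0.
have [c0 c0E] := sq ((1 + fine B)^-1) ltac:(rewrite invr_gt0; lra).
have KC := K _ c0; rewrite c0E -(fineK Bfn) -EFinM lee_fin in KC.
have {}KC := KC ltac:(rewrite ler_pdivrMl; lra).
have Cfn : C \is a fin_num.
  rewrite ge0_fin_numE ?ltW //; rewrite ltNge leye_eq; apply/negP => /eqP Cy.
  move: KC; rewrite Cy gt0_muley ?lte_fin ?invr_gt0; last lra.
  by rewrite leye_eq => /eqP ly; move: lamfin; rewrite ly.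
have lamfn : lam \is a fin_num.
  rewrite ge0_fin_numE //; apply: le_trans KC; rewrite mule_ge0 ?ltW //.
  by rewrite lte_fin invr_gt0 /=; lra.
have Kr c : 0 < c -> c ^+ 2 * fine B <= 1 -> c ^+ 2 * fine C <= fine lam.
  move=> cp cb; have := K c cp.
  rewrite -(fineK Bfn) -(fineK Cfn) -(fineK lamfn) -!EFinM !lee_fin; apply.
  exact: cb.
have cc0 : 0 < fine C by rewrite fine_gt0 // C0 -ge0_fin_numE ?ltW // Cfn.
have ba : fine B <= (1 + eps) * fine A.
  by move: BA; rewrite -(fineK Afn) -(fineK Bfn) -EFinM lee_fin.
move: b0; rewrite le_eqVlt => /orP[/eqP b0|bp].
  have [s1 s1E] := sq 1 ltr01.
  have := Kr _ s1; rewrite s1E -b0 mulr0 mul1r => /(_ ler01) cl.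
  have [s2 s2E] := sq ((fine lam + 1) / fine C) ltac:(rewrite divr_gt0 //; lra).
  have := Kr _ s2; rewrite s2E -b0 mulr0 => /(_ ler01) H.
  by move: H; rewrite divfK ?gt_eqF // gerDl ler10.
have [s3 s3E] := sq ((fine B)^-1) ltac:(by rewrite invr_gt0).
have := Kr _ s3; rewrite s3E mulVf ?gt_eqF // => /(_ (lexx _)) cl.
apply: (final_ineq eps0 bp cc0 ba); by rewrite mulrC.
Qed.
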